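(* Let $(\Omega,\mathcal{F})$ be a measurable space, $\mathcal{P}$ a nonempty set of probability measures on it, $\hat{\mathbb{E}}[Z]=\sup_{P\in\mathcal{P}}E_P[Z]$, and let $X,Y$ be random variables with $\hat{\mathbb{E}}[X^2]+\hat{\mathbb{E}}[Y^2]<\infty$. Let $\rho_X=\frac12(\overline{\mu}_X+\underline{\mu}_X)$, $\rho_Y=\frac12(\overline{\mu}_Y+\underline{\mu}_Y)$, $\Delta_X=\overline{\mu}_X-\underline{\mu}_X$, $\Delta_Y=\overline{\mu}_Y-\underline{\mu}_Y$. Then: (1) If $(\mu_1,\mu_2)=(\overline{\mu}_X,\overline{\mu}_Y)$ or $(\mu_1,\mu_2)=(\underline{\mu}_X,\underline{\mu}_Y)$, then $\overline{C}(X,Y)\le\hat{\mathbb{E}}[(X-\mu_1)(Y-\mu_2)]\le\overline{C}(X,Y)+\Delta_X\Delta_Y$ and $\underline{C}(X,Y)\le-\hat{\mathbb{E}}[-(X-\mu_1)(Y-\mu_2)]\le\underline{C}(X,Y)+\Delta_X\Delta_Y$. If $(\mu_1,\mu_2)=(\underline{\mu}_X,\overline{\mu}_Y)$ or $(\mu_1,\mu_2)=(\overline{\mu}_X,\underline{\mu}_Y)$, then $\overline{C}(X,Y)-\Delta_X\Delta_Y\le\hat{\mathbb{E}}[(X-\mu_1)(Y-\mu_2)]\le\overline{C}(X,Y)+\Delta_X\Delta_Y$ and $\underline{C}(X,Y)-\Delta_X\Delta_Y\le-\hat{\mathbb{E}}[-(X-\mu_1)(Y-\mu_2)]\le\underline{C}(X,Y)+\Delta_X\Delta_Y$.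 (2) Let $\overline{M}(X,Y)=\max\{\underline{\mu}_X\underline{\mu}_Y,\overline{\mu}_X\underline{\mu}_Y,\underline{\mu}_X\overline{\mu}_Y,\overline{\mu}_X\overline{\mu}_Y\}$ and $\underline{M}(X,Y)=\min\{\underline{\mu}_X\underline{\mu}_Y,\overline{\mu}_X\underline{\mu}_Y,\underline{\mu}_X\overline{\mu}_Y,\overline{\mu}_X\overline{\mu}_Y\}$. Then $\overline{C}(X,Y)+\underline{M}(X,Y)\le\hat{\mathbb{E}}[XY]\le\overline{C}(X,Y)+\overline{M}(X,Y)$ and $\underline{C}(X,Y)+\underline{M}(X,Y)\le-\hat{\mathbb{E}}[-XY]\le\underline{C}(X,Y)+\overline{M}(X,Y)$. (3) $\hat{\mathbb{E}}[(X-\rho_X)(Y-\rho_Y)]-\frac14\Delta_X\Delta_Y\le\overline{C}(X,Y)\le\hat{\mathbb{E}}[(X-\rho_X)(Y-\rho_Y)]+\frac14\Delta_X\Delta_Y$ and $-\hat{\mathbb{E}}[-(X-\rho_X)(Y-\rho_Y)]-\frac14\Delta_X\Delta_Y\le\underline{C}(X,Y)\le-\hat{\mathbb{E}}[-(X-\rho_X)(Y-\rho_Y)]+\frac14\Delta_X\Delta_Y$. (4) $0\le\overline{C}(X,Y)-\underline{C}(X,Y)\le\hat{\mathbb{E}}[(X-\rho_X)(Y-\rho_Y)]+\hat{\mathbb{E}}[-(X-\rho_X)(Y-\rho_Y)]+\frac12\Delta_X\Delta_Y$.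
   Context: For a random variable $W$ with $\hat{\mathbb{E}}[W^2]<\infty$: $\overline{\mu}_W=\hat{\mathbb{E}}[W]$, $\underline{\mu}_W=-\hat{\mathbb{E}}[-W]$, $M_W=[\underline{\mu}_W,\overline{\mu}_W]$. Upper covariance $\overline{C}(X,Y)=\max_{\mu_2\in M_Y}\min_{\mu_1\in M_X}\hat{\mathbb{E}}[(X-\mu_1)(Y-\mu_2)]$; lower covariance $\underline{C}(X,Y)=\min_{\mu_2\in M_Y}\max_{\mu_1\in M_X}\left(-\hat{\mathbb{E}}[-(X-\mu_1)(Y-\mu_2)]\right)$. *)

(* Defs.v *)
From HB Require Import structures.
From mathcomp Require Import all_boot all_order all_algebra.
From mathcomp Require Import all_classical all_reals all_analysis.
Set Implicit Arguments. Unset Strict Implicit. Unset Printing Implicit Defensive.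
Import Order.TTheory GRing.Theory Num.Theory.
Local Open Scope classical_set_scope.
Local Open Scope ring_scope.

Section sublinear.
Context {d : measure_display} {T : measurableType d} {R : realType}.
Variable Pset : set (probability T R).

Definition Ehat (Z : T -> R) : \bar R :=
  ereal_sup [set ('E_p[Z])%E | p in Pset].

(* upper / lower means (finite under the standing square-integrability) *)
Definition mu_up (W : T -> R) : R := fine (Ehat W).
Definition mu_lo (W : T -> R) : R := fine (- Ehat (fun w => - W w)%R)%E.

Definition Mint (W : T -> R) : set R := [set m | mu_lo W <= m <= mu_up W].

(* upper covariance: max_{m2 in M_Y} min_{m1 in M_X} Ehat[(X-m1)(Y-m2)]
   (max/min written as sup/inf; they are attained) *)
Definition ucov (X Y : T -> R) : \bar R :=
  ereal_sup [set ereal_inf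
      [set Ehat (fun w => (X w - m1) * (Y w - m2)) | m1 in Mint X]
    | m2 in Mint Y].

Definition lcov (X Y : T -> R) : \bar R :=
  ereal_inf [set ereal_sup
      [set (- Ehat (fun w => - ((X w - m1) * (Y w - m2)))%R)%E | m1 in Mint X]
    | m2 in Mint Y].

End sublinear.

(* Main.v *)
Require Import Defs.
From HB Require Import structures.
From mathcomp Require Import all_boot all_order all_algebra.
From mathcomp Require Import all_classical all_reals all_analysis.
From mathcomp Require Import ring lra measurable_realfun.
Import Order.TTheory GRing.Theory Num.Theory.
Local Open Scope classical_set_scope.
Local Open Scope ring_scope.

Section per_P.
Context d (T : measurableType d) (R : realType) (P : probability T R).

Lemma intD {f g : T -> R} : P.-integrable setT (EFin \o f) ->
  P.-integrable setT (EFin \o g) -> P.-integrable setT (EFin \o (f \+ g)).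
Proof.
move=> hf hg; have H := integrableD measurableT hf hg.
by apply: eq_integrable H => // x _ /=; rewrite EFinD.
Qed.

Lemma intZ (k : R) {f : T -> R} : P.-integrable setT (EFin \o f) ->
  P.-integrable setT (EFin \o (k \o* f)).
Proof.
move=> hf; have H := integrableZl measurableT k hf.
by apply: eq_integrable H => // x _ /=; rewrite EFinM muleC.
Qed.

Lemma intC (k : R) : P.-integrable setT (EFin \o (cst k : T -> R)).
Proof. exact: finite_measure_integrable_cst. Qed.

Lemma iL {f : T -> R} : P.-integrable setT (EFin \o f) -> f \in Lfun P 1.
Proof. by move=> h; apply/Lfun1_integrable. Qed.

Lemma Efine {f : T -> R} : P.-integrable setT (EFin \o f) ->
  ('E_P[f] = (fine 'E_P[f])%:E)%E.
Proof. by move=> h; rewrite fineK// expectation_fin_num// iL. Qed.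

Variables (X Y : T -> R).
Hypotheses (mX : measurable_fun setT X) (mY : measurable_fun setT Y).
Hypotheses (hX2 : ('E_P[(fun w => X w ^+ 2)%R] < +oo)%E)
           (hY2 : ('E_P[(fun w => Y w ^+ 2)%R] < +oo)%E).

Lemma int_sq (Z : T -> R) : measurable_fun setT Z ->
  ('E_P[(fun w => Z w ^+ 2)%R] < +oo)%E ->
  P.-integrable setT (EFin \o (fun w => Z w ^+ 2)).
Proof.
move=> mZ hZ; apply/integrableP; split.
  by apply/measurable_EFinP; exact: measurable_funX.
rewrite (eq_integral (fun w => (Z w ^+ 2)%:E)%E); last first.
  by move=> w _ /=; rewrite ger0_norm // sqr_ge0.
by move: hZ; rewrite unlock.
Qed.

Lemma iX2 : P.-integrable setT (EFin \o (fun w => X w ^+ 2)).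
Proof. exact: int_sq. Qed.
Lemma iY2 : P.-integrable setT (EFin \o (fun w => Y w ^+ 2)).
Proof. exact: int_sq. Qed.

Lemma iX : P.-integrable setT (EFin \o X).
Proof.
have H := intD (intC 1) iX2. refine (le_integrable measurableT _ _ H).
  exact/measurable_EFinP.
move=> w _ /=; rewrite lee_fin (@ger0_norm _ (1 + X w ^+ 2)); last by rewrite addr_ge0 ?sqr_ge0.
by rewrite ler_norml; apply/andP; split; nra.
Qed.

Lemma iY : P.-integrable setT (EFin \o Y).
Proof.
refine (le_integrable measurableT _ _ (intD (intC 1) iY2)).
  exact/measurable_EFinP.
move=> w _ /=; rewrite lee_fin (@ger0_norm _ (1 + Y w ^+ 2)); last by rewrite addr_ge0 ?sqr_ge0.
by rewrite ler_norml; apply/andP; split; nra.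
Qed.

Lemma iXY : P.-integrable setT (EFin \o (fun w => X w * Y w)).
Proof.
refine (le_integrable measurableT _ _ (intD iX2 iY2)).
  by apply/measurable_EFinP; exact: measurable_funM.
move=> w _ /=; rewrite lee_fin (@ger0_norm _ (X w ^+ 2 + Y w ^+ 2)); last by rewrite addr_ge0 ?sqr_ge0.
by rewrite ler_norml; apply/andP; split; nra.
Qed.

Lemma Elin (a b c e f g : R) : (
  'E_P[(fun w => a + b * X w + c * Y w + e * (X w * Y w) + f * X w ^+ 2
                + g * Y w ^+ 2)%R] =
  (a + b * fine 'E_P[X] + c * fine 'E_P[Y] + e * fine 'E_P[(fun w => X w * Y w)%R]
   + f * fine 'E_P[(fun w => X w ^+ 2)%R] + g * fine 'E_P[(fun w => Y w ^+ 2)%R])%R%:E)%E.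
Proof.
have i1 := intD (intC a) (intZ b iX).
have i2 := intD i1 (intZ c iY).
have i3 := intD i2 (intZ e iXY).
have i4 := intD i3 (intZ f iX2).
have i5 := intD i4 (intZ g iY2).
set F := (fun w => _).
have -> : F = ((((cst a \+ b \o* X) \+ c \o* Y) \+ e \o* (fun w => X w * Y w))
           \+ f \o* (fun w => X w ^+ 2)) \+ g \o* (fun w => Y w ^+ 2).
  by apply/funext => w; rewrite /F /=; ring.
rewrite expectationD ?iL ?intZ ?iY2 //.
rewrite expectationD ?iL ?intZ ?iX2 //.
rewrite expectationD ?iL ?intZ ?iXY //.
rewrite expectationD ?iL ?intZ ?iY //.
rewrite expectationD ?iL ?intZ ?iX ?intC //.
rewrite !expectationZl ?iL ?iX ?iY ?iXY ?iX2 ?iY2 // expectation_cst.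
rewrite (Efine iX) (Efine iY) (Efine iXY) (Efine iX2) (Efine iY2) /=.
by rewrite -!EFinM -!EFinD.
Qed.

End per_P.

Section reals.
Context {R : realType}.

Lemma esup_real {A : Type} (I : set A) (h : A -> R) : I !=set0 ->
  (exists M, forall p, I p -> h p <= M) ->
  exists s : R, ereal_sup [set (h p)%:E | p in I] = s%:E /\
    (forall p, I p -> h p <= s) /\
    (forall M, (forall p, I p -> h p <= M) -> s <= M).
Proof.
case=> p0 Ip0 [M hM].
have h1 : forall p, I p -> ((h p)%:E <= ereal_sup [set (h p)%:E | p in I])%E.
  by move=> p Ip; apply: ereal_sup_ubound; exists p.
have h2 : forall M', (forall p, I p -> h p <= M') ->
    (ereal_sup [set (h p)%:E | p in I] <= M'%:E)%E.
  by move=> M' hM'; apply: ge_ereal_sup => _ [p Ip <-]; rewrite lee_fin hM'.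
have hfin : ereal_sup [set (h p)%:E | p in I] \is a fin_num.
  by rewrite fin_numElt (lt_le_trans (ltNyr (h p0)) (h1 _ Ip0)) (le_lt_trans (h2 _ hM) (ltry M)).
exists (fine (ereal_sup [set (h p)%:E | p in I])); rewrite fineK //; split => //; split.
  by move=> p Ip; rewrite -lee_fin fineK // h1.
by move=> M' hM'; rewrite -lee_fin fineK // h2.
Qed.

Lemma prodle (s t S T : R) : -S <= s <= S -> -T <= t <= T -> s * t <= S * T.
Proof.
move=> /andP[h1 h2] /andP[h3 h4].
have [s0|s0] := leP 0 s; have [t0|t0] := leP 0 t; nra.
Qed.

Lemma bilin {lX uX lY uY x y : R} : lX <= x <= uX -> lY <= y <= uY ->
  Num.min (Num.min (lX * lY) (uX * lY)) (Num.min (lX * uY) (uX * uY)) <= x * y <=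
  Num.max (Num.max (lX * lY) (uX * lY)) (Num.max (lX * uY) (uX * uY)).
Proof.
move=> /andP[h1 h2] /andP[h3 h4]; apply/andP; split.
  rewrite !ge_min.
  have [y0|y0] := leP 0 y.
    have ? : lX * y <= x * y by nra.
    have [l0|l0] := leP 0 lX.
      have ? : lX * lY <= lX * y by nra.
      by apply/orP; left; apply/orP; left; lra.
    have ? : lX * uY <= lX * y by nra.
    by apply/orP; right; apply/orP; left; lra.
  have ? : uX * y <= x * y by nra.
  have [u0|u0] := leP 0 uX.
    have ? : uX * lY <= uX * y by nra.
    by apply/orP; left; apply/orP; right; lra.
  have ? : uX * uY <= uX * y by nra.
  by apply/orP; right; apply/orP; right; lra.
rewrite !le_max.
have [y0|y0] := leP 0 y.
  have ? : x * y <= uX * y by nra.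
  have [u0|u0] := leP 0 uX.
    have ? : uX * y <= uX * uY by nra.
    by apply/orP; right; apply/orP; right; lra.
  have ? : uX * y <= uX * lY by nra.
  by apply/orP; left; apply/orP; right; lra.
have ? : x * y <= lX * y by nra.
have [l0|l0] := leP 0 lX.
  have ? : lX * y <= lX * uY by nra.
  by apply/orP; right; apply/orP; left; lra.
have ? : lX * y <= lX * lY by nra.
by apply/orP; left; apply/orP; left; lra.
Qed.

Definition Mmax (a b c e : R) := Num.max (Num.max (a * c) (b * c)) (Num.max (a * e) (b * e)).
Definition Mmin (a b c e : R) := Num.min (Num.min (a * c) (b * c)) (Num.min (a * e) (b * e)).

Lemma bilin' {lX uX lY uY x y : R} : lX <= x <= uX -> lY <= y <= uY ->
  Mmin lX uX lY uY <= x * y /\ x * y <= Mmax lX uX lY uY.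
Proof. by move=> h1 h2; have /andP[] := bilin h1 h2. Qed.

Lemma clamp (lX uX lY uY m2 : R) : lX <= uX -> lY <= m2 <= uY ->
  exists m1, lX <= m1 <= uX /\ forall x y, lX <= x <= uX -> lY <= y <= uY ->
  (Mmin lX uX lY uY <= m1 * y + m2 * x - m1 * m2) /\ (m1 * y + m2 * x - m1 * m2 <= Mmax lX uX lY uY).
Proof.
move=> hX /andP[hm1 hm2].
have [l0|l0] := ltP 0 lX.
  exists lX; split; first by rewrite lexx hX.
  move=> x y hx hy; have /andP[hx1 hx2] := hx; have /andP[hy1 hy2] := hy.
  have hl : lY <= lY <= uY by rewrite lexx (le_trans hm1 hm2).
  have hu : lY <= uY <= uY by rewrite lexx (le_trans hm1 hm2).
  have [a1 _] := bilin' hx hl.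
  have [_ a2] := bilin' hx hu.
  have ? : 0 <= lX * (y - lY) by nra.
  have ? : 0 <= (m2 - lY) * (x - lX) by nra.
  have ? : 0 <= lX * (uY - y) by nra.
  have ? : 0 <= (uY - m2) * (x - lX) by nra.
  split; nra.
have [u0|u0] := ltP uX 0.
  exists uX; split; first by rewrite lexx hX.
  move=> x y hx hy; have /andP[hx1 hx2] := hx; have /andP[hy1 hy2] := hy.
  have hl : lY <= lY <= uY by rewrite lexx (le_trans hm1 hm2).
  have hu : lY <= uY <= uY by rewrite lexx (le_trans hm1 hm2).
  have [a1 _] := bilin' hx hu.
  have [_ a2] := bilin' hx hl.
  have ? : 0 <= uX * (y - uY) by nra.
  have ? : 0 <= (m2 - uY) * (x - uX) by nra.
  have ? : 0 <= uX * (lY - y) by nra.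
  have ? : 0 <= (lY - m2) * (x - uX) by nra.
  split; nra.
exists 0; split; first by rewrite l0 u0.
move=> x y hx _.
have -> : 0 * y + m2 * x - 0 * m2 = x * m2 by ring.
have hm : lY <= m2 <= uY by rewrite hm1 hm2.
exact: (bilin' hx hm).
Qed.

End reals.

Lemma abs_bnd {R : realType} (a : R) {b K : R} : -K <= b <= K ->
  a * b <= `|a| * K /\ - (a * b) <= `|a| * K.
Proof.
move=> /andP[h1 h2].
have [a0|a0] := leP 0 a.
  by rewrite ger0_norm //; split; nra.
by rewrite ltr0_norm //; split; nra.
Qed.

Theorem proposition3p16 (d : measure_display) (T : measurableType d)
  (R : realType) (Pset : set (probability T R)) (X Y : T -> R) :
  Pset !=set0 ->
  measurable_fun setT X -> measurable_fun setT Y ->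
  (Ehat Pset (fun w => X w ^+ 2)%R + Ehat Pset (fun w => Y w ^+ 2)%R < +oo)%E ->
  let muXu := mu_up Pset X in let muXl := mu_lo Pset X in
  let muYu := mu_up Pset Y in let muYl := mu_lo Pset Y in
  let rhoX := (muXu + muXl) / 2 in let rhoY := (muYu + muYl) / 2 in
  let DX := muXu - muXl in let DY := muYu - muYl in
  let Cu := ucov Pset X Y in let Cl := lcov Pset X Y in
  let EU := fun m1 m2 => Ehat Pset (fun w => (X w - m1) * (Y w - m2)) in
  let EL := fun m1 m2 =>
    (- Ehat Pset (fun w => - ((X w - m1) * (Y w - m2)))%R)%E in
  let Mu := Num.max (Num.max (muXl * muYl) (muXu * muYl))
                    (Num.max (muXl * muYu) (muXu * muYu)) in
  let Ml := Num.min (Num.min (muXl * muYl) (muXu * muYl))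
                    (Num.min (muXl * muYu) (muXu * muYu)) in
  (* (1) *)
  ((forall m1 m2, (m1, m2) = (muXu, muYu) \/ (m1, m2) = (muXl, muYl) ->
      (Cu <= EU m1 m2 <= Cu + (DX * DY)%:E)%E /\
      (Cl <= EL m1 m2 <= Cl + (DX * DY)%:E)%E) /\
   (forall m1 m2, (m1, m2) = (muXl, muYu) \/ (m1, m2) = (muXu, muYl) ->
      (Cu - (DX * DY)%:E <= EU m1 m2 <= Cu + (DX * DY)%:E)%E /\
      (Cl - (DX * DY)%:E <= EL m1 m2 <= Cl + (DX * DY)%:E)%E)) /\
  (* (2) *)
  ((Cu + Ml%:E <= Ehat Pset (fun w => X w * Y w)%R <= Cu + Mu%:E)%E /\
   (Cl + Ml%:E <= - Ehat Pset (fun w => - (X w * Y w))%R <= Cl + Mu%:E)%E) /\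
  (* (3) *)
  ((EU rhoX rhoY - (DX * DY / 4)%:E <= Cu <= EU rhoX rhoY + (DX * DY / 4)%:E)%E /\
   (EL rhoX rhoY - (DX * DY / 4)%:E <= Cl <= EL rhoX rhoY + (DX * DY / 4)%:E)%E) /\
  (* (4) *)
  (0 <= Cu - Cl <=
     EU rhoX rhoY + Ehat Pset (fun w => - ((X w - rhoX) * (Y w - rhoY)))%R
     + (DX * DY / 2)%:E)%E.

Proof.
move=> Pne mX mY Hsq muXu muXl muYu muYl rhoX rhoY DX DY Cu Cl EU EL Mu Ml.
have [p0 Ip0] := Pne.
have ubX2 : forall p, Pset p ->
    ('E_p[(fun w => X w ^+ 2)%R] <= Ehat Pset (fun w => X w ^+ 2)%R)%E.
  by move=> p Ip; apply: ereal_sup_ubound; exists p.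
have ubY2 : forall p, Pset p ->
    ('E_p[(fun w => Y w ^+ 2)%R] <= Ehat Pset (fun w => Y w ^+ 2)%R)%E.
  by move=> p Ip; apply: ereal_sup_ubound; exists p.
have ge0X2 : forall p : probability T R, (0 <= 'E_p[(fun w => X w ^+ 2)%R])%E.
  by move=> p; apply: expectation_ge0 => w; exact: sqr_ge0.
have ge0Y2 : forall p : probability T R, (0 <= 'E_p[(fun w => Y w ^+ 2)%R])%E.
  by move=> p; apply: expectation_ge0 => w; exact: sqr_ge0.
have EX2ge0 := le_trans (ge0X2 p0) (ubX2 p0 Ip0).
have EY2ge0 := le_trans (ge0Y2 p0) (ubY2 p0 Ip0).
have EX2lt := le_lt_trans (leeDl _ EY2ge0) Hsq.
have EY2lt : (Ehat Pset (fun w => Y w ^+ 2)%R < +oo)%E.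
  by rewrite addeC in Hsq; exact: le_lt_trans (leeDl _ EX2ge0) Hsq.
have hX2 : forall p, Pset p -> ('E_p[(fun w => X w ^+ 2)%R] < +oo)%E.
  by move=> p Ip; exact: le_lt_trans (ubX2 p Ip) EX2lt.
have hY2 : forall p, Pset p -> ('E_p[(fun w => Y w ^+ 2)%R] < +oo)%E.
  by move=> p Ip; exact: le_lt_trans (ubY2 p Ip) EY2lt.
pose BX := fine (Ehat Pset (fun w => X w ^+ 2)%R).
pose BY := fine (Ehat Pset (fun w => Y w ^+ 2)%R).
have EBX : Ehat Pset (fun w => X w ^+ 2)%R = BX%:E.
  by rewrite /BX fineK // ge0_fin_numE.
have EBY : Ehat Pset (fun w => Y w ^+ 2)%R = BY%:E.
  by rewrite /BY fineK // ge0_fin_numE.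
have BX0 : 0 <= BX by rewrite -lee_fin -EBX.
have BY0 : 0 <= BY by rewrite -lee_fin -EBY.
pose x := fun p : probability T R => fine 'E_p[X].
pose y := fun p : probability T R => fine 'E_p[Y].
pose c := fun p : probability T R => fine 'E_p[(fun w => X w * Y w)%R].
pose xx := fun p : probability T R => fine 'E_p[(fun w => X w ^+ 2)%R].
pose yy := fun p : probability T R => fine 'E_p[(fun w => Y w ^+ 2)%R].
have EL6 : forall p, Pset p -> forall a b c' e f g : R,
   ('E_p[(fun w => a + b * X w + c' * Y w + e * (X w * Y w) + f * X w ^+ 2
                + g * Y w ^+ 2)%R] =
   (a + b * x p + c' * y p + e * c p + f * xx p + g * yy p)%:E)%E.
  by move=> p Ip a b c' e f g; exact: (@Elin _ _ _ p X Y mX mY (hX2 p Ip) (hY2 p Ip)).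
have Epos : forall p, Pset p -> forall a b c' e f g : R,
   (forall w, 0 <= a + b * X w + c' * Y w + e * (X w * Y w) + f * X w ^+ 2
                + g * Y w ^+ 2) ->
   0 <= a + b * x p + c' * y p + e * c p + f * xx p + g * yy p.
  move=> p Ip a b c' e f g h.
  have := @expectation_ge0 _ _ _ p (fun w => a + b * X w + c' * Y w
     + e * (X w * Y w) + f * X w ^+ 2 + g * Y w ^+ 2) h.
  by rewrite EL6 // lee_fin.
have Exx : forall p, Pset p -> ('E_p[(fun w => X w ^+ 2)%R] = (xx p)%:E)%E.
  move=> p Ip; rewrite (_ : (fun w => X w ^+ 2) = (fun w => 0 + 0 * X w + 0 * Y w
     + 0 * (X w * Y w) + 1 * X w ^+ 2 + 0 * Y w ^+ 2)); last first.
    by apply/funext => w; ring.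
  by rewrite EL6 //; congr EFin; ring.
have Eyy : forall p, Pset p -> ('E_p[(fun w => Y w ^+ 2)%R] = (yy p)%:E)%E.
  move=> p Ip; rewrite (_ : (fun w => Y w ^+ 2) = (fun w => 0 + 0 * X w + 0 * Y w
     + 0 * (X w * Y w) + 0 * X w ^+ 2 + 1 * Y w ^+ 2)); last first.
    by apply/funext => w; ring.
  by rewrite EL6 //; congr EFin; ring.
have xxB : forall p, Pset p -> xx p <= BX.
  by move=> p Ip; rewrite -lee_fin -Exx // -EBX ubX2.
have yyB : forall p, Pset p -> yy p <= BY.
  by move=> p Ip; rewrite -lee_fin -Eyy // -EBY ubY2.
pose K := 1 + BX + BY.
have bnd : forall p, Pset p -> [/\ -K <= x p <= K, -K <= y p <= K & -K <= c p <= K].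
  move=> p Ip.
  have h1 := Epos p Ip 1 (-1) 0 0 1 0 (fun w => ltac:(nra)).
  have h2 := Epos p Ip 1 1 0 0 1 0 (fun w => ltac:(nra)).
  have h3 := Epos p Ip 1 0 (-1) 0 0 1 (fun w => ltac:(nra)).
  have h4 := Epos p Ip 1 0 1 0 0 1 (fun w => ltac:(nra)).
  have h5 := Epos p Ip 0 0 0 (-1) 1 1 (fun w => ltac:(nra)).
  have h6 := Epos p Ip 0 0 0 1 1 1 (fun w => ltac:(nra)).
  have h7 := xxB p Ip; have h8 := yyB p Ip.
  have eK : K = 1 + BX + BY by [].
  by clear -h1 h2 h3 h4 h5 h6 h7 h8 eK BX0 BY0; split; apply/andP; split; lra.
pose e := fun p m1 m2 => c p - m1 * y p - m2 * x p + m1 * m2.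
have EZ : forall p, Pset p -> forall m1 m2,
    ('E_p[(fun w => (X w - m1) * (Y w - m2))%R] = (e p m1 m2)%:E)%E.
  move=> p Ip m1 m2.
  rewrite (_ : (fun w => (X w - m1) * (Y w - m2)) = (fun w => m1 * m2 + (- m2) * X w
     + (- m1) * Y w + 1 * (X w * Y w) + 0 * X w ^+ 2 + 0 * Y w ^+ 2)); last first.
    by apply/funext => w; ring.
  by rewrite EL6 //; congr EFin; rewrite /e; ring.
have EZN : forall p, Pset p -> forall m1 m2,
    ('E_p[(fun w => - ((X w - m1) * (Y w - m2)))%R] = (- e p m1 m2)%:E)%E.
  move=> p Ip m1 m2.
  rewrite (_ : (fun w => - ((X w - m1) * (Y w - m2))) = (fun w => - (m1 * m2) + m2 * X w
     + m1 * Y w + (-1) * (X w * Y w) + 0 * X w ^+ 2 + 0 * Y w ^+ 2)); last first.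
    by apply/funext => w; ring.
  by rewrite EL6 //; congr EFin; rewrite /e; ring.
have EXx : forall p, Pset p -> ('E_p[X] = (x p)%:E)%E.
  move=> p Ip; rewrite {1}(_ : X = (fun w => 0 + 1 * X w + 0 * Y w
     + 0 * (X w * Y w) + 0 * X w ^+ 2 + 0 * Y w ^+ 2)); last first.
    by apply/funext => w; ring.
  by rewrite EL6 //; congr EFin; ring.
have EYy : forall p, Pset p -> ('E_p[Y] = (y p)%:E)%E.
  move=> p Ip; rewrite {1}(_ : Y = (fun w => 0 + 0 * X w + 1 * Y w
     + 0 * (X w * Y w) + 0 * X w ^+ 2 + 0 * Y w ^+ 2)); last first.
    by apply/funext => w; ring.
  by rewrite EL6 //; congr EFin; ring.
have EXn : forall p, Pset p -> ('E_p[(fun w => - X w)%R] = (- x p)%:E)%E.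
  move=> p Ip; rewrite (_ : (fun w => - X w) = (fun w => 0 + (-1) * X w + 0 * Y w
     + 0 * (X w * Y w) + 0 * X w ^+ 2 + 0 * Y w ^+ 2)); last first.
    by apply/funext => w; ring.
  by rewrite EL6 //; congr EFin; ring.
have EYn : forall p, Pset p -> ('E_p[(fun w => - Y w)%R] = (- y p)%:E)%E.
  move=> p Ip; rewrite (_ : (fun w => - Y w) = (fun w => 0 + 0 * X w + (-1) * Y w
     + 0 * (X w * Y w) + 0 * X w ^+ 2 + 0 * Y w ^+ 2)); last first.
    by apply/funext => w; ring.
  by rewrite EL6 //; congr EFin; ring.
have ebnd : forall m1 m2, exists M, forall p, Pset p -> e p m1 m2 <= M /\ - e p m1 m2 <= M.
  move=> m1 m2; exists (K + `|m1| * K + `|m2| * K + `|m1 * m2|).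
  move=> p Ip; have [hx hy hc] := bnd p Ip.
  have [a1 a2] := abs_bnd m1 hy.
  have [b1 b2] := abs_bnd m2 hx.
  have c1 := ler_norm (m1 * m2).
  have c2 : - (m1 * m2) <= `|m1 * m2| by rewrite -normrN ler_norm.
  move: hc => /andP[hc1 hc2].
  rewrite /e; clear -a1 a2 b1 b2 c1 c2 hc1 hc2; split; lra.
have HF : forall m1 m2, exists s, EU m1 m2 = s%:E /\
    (forall p, Pset p -> e p m1 m2 <= s) /\
    (forall M, (forall p, Pset p -> e p m1 m2 <= M) -> s <= M).
  move=> m1 m2; rewrite /EU /Ehat (eq_imagel (fun p Ip => EZ p Ip m1 m2)).
  apply: esup_real => //; have [M hM] := ebnd m1 m2.
  by exists M => p Ip; case: (hM p Ip).
have HG : forall m1 m2, exists s, EL m1 m2 = s%:E /\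
    (forall p, Pset p -> s <= e p m1 m2) /\
    (forall M, (forall p, Pset p -> M <= e p m1 m2) -> M <= s).
  move=> m1 m2; rewrite /EL /Ehat (eq_imagel (fun p Ip => EZN p Ip m1 m2)).
  have [M hM] := ebnd m1 m2.
  have [s [E1 [h1 h2]]] := @esup_real _ _ Pset (fun p => - e p m1 m2) Pne
    (ex_intro _ M (fun p Ip => proj2 (hM p Ip))).
  move: E1 => /= ->; exists (- s); split; first by [].
  split; first by move=> p Ip; have := h1 p Ip; lra.
  move=> M' hM'; suff : s <= - M' by lra.
  by apply: h2 => p Ip; have := hM' p Ip; lra.
have xbnd : exists M, forall p, Pset p -> x p <= M.
  by exists K => p Ip; have [/andP[_ ?] _ _] := bnd p Ip.
have xnbnd : exists M, forall p, Pset p -> - x p <= M.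
  by exists K => p Ip; have [/andP[? _] _ _] := bnd p Ip; lra.
have ybnd : exists M, forall p, Pset p -> y p <= M.
  by exists K => p Ip; have [_ /andP[_ ?] _] := bnd p Ip.
have ynbnd : exists M, forall p, Pset p -> - y p <= M.
  by exists K => p Ip; have [_ /andP[? _] _] := bnd p Ip; lra.
have [hXu1 hXu2] : (forall p, Pset p -> x p <= muXu) /\
    (forall M, (forall p, Pset p -> x p <= M) -> muXu <= M).
  have [s [E1 h]] := @esup_real _ _ Pset x Pne xbnd.
  by rewrite /muXu /mu_up /Ehat (eq_imagel EXx) E1.
have [hYu1 hYu2] : (forall p, Pset p -> y p <= muYu) /\
    (forall M, (forall p, Pset p -> y p <= M) -> muYu <= M).
  have [s [E1 h]] := @esup_real _ _ Pset y Pne ybnd.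
  by rewrite /muYu /mu_up /Ehat (eq_imagel EYy) E1.
have [hXl1 hXl2] : (forall p, Pset p -> muXl <= x p) /\
    (forall M, (forall p, Pset p -> M <= x p) -> M <= muXl).
  have [s [E1 [h1 h2]]] := @esup_real _ _ Pset (fun p => - x p) Pne xnbnd.
  move: E1 => /= E1.
  rewrite /muXl /mu_lo /Ehat (eq_imagel EXn) E1 /=; split.
    by move=> p Ip; have := h1 p Ip; lra.
  move=> M hM; suff : s <= - M by lra.
  by apply: h2 => p Ip; have := hM p Ip; lra.
have [hYl1 hYl2] : (forall p, Pset p -> muYl <= y p) /\
    (forall M, (forall p, Pset p -> M <= y p) -> M <= muYl).
  have [s [E1 [h1 h2]]] := @esup_real _ _ Pset (fun p => - y p) Pne ynbnd.
  move: E1 => /= E1.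
  rewrite /muYl /mu_lo /Ehat (eq_imagel EYn) E1 /=; split.
    by move=> p Ip; have := h1 p Ip; lra.
  move=> M hM; suff : s <= - M by lra.
  by apply: h2 => p Ip; have := hM p Ip; lra.
pose F := fun m1 m2 => fine (EU m1 m2).
pose G := fun m1 m2 => fine (EL m1 m2).
have hF1 : forall m1 m2, EU m1 m2 = (F m1 m2)%:E.
  by move=> m1 m2; have [s [E1 _]] := HF m1 m2; rewrite /F E1.
have hF2 : forall m1 m2 p, Pset p -> e p m1 m2 <= F m1 m2.
  by move=> m1 m2; have [s [E1 [h1 _]]] := HF m1 m2; rewrite /F E1.
have hF3 : forall m1 m2 M, (forall p, Pset p -> e p m1 m2 <= M) -> F m1 m2 <= M.
  by move=> m1 m2; have [s [E1 [_ h2]]] := HF m1 m2; rewrite /F E1.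
have hG1 : forall m1 m2, EL m1 m2 = (G m1 m2)%:E.
  by move=> m1 m2; have [s [E1 _]] := HG m1 m2; rewrite /G E1.
have hG2 : forall m1 m2 p, Pset p -> G m1 m2 <= e p m1 m2.
  by move=> m1 m2; have [s [E1 [h1 _]]] := HG m1 m2; rewrite /G E1.
have hG3 : forall m1 m2 M, (forall p, Pset p -> M <= e p m1 m2) -> M <= G m1 m2.
  by move=> m1 m2; have [s [E1 [_ h2]]] := HG m1 m2; rewrite /G E1.
have SF1 : forall m1 m1' m2 B, (forall p, Pset p -> (m1 - m1') * (y p - m2) <= B) ->
    F m1' m2 <= F m1 m2 + B.
  move=> m1 m1' m2 B h; apply: hF3 => p Ip.
  have := hF2 m1 m2 p Ip; have := h p Ip.
  have -> : e p m1' m2 = e p m1 m2 + (m1 - m1') * (y p - m2) by rewrite /e; ring.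
  lra.
have SF2 : forall m1 m2 m2' B, (forall p, Pset p -> (m2 - m2') * (x p - m1) <= B) ->
    F m1 m2' <= F m1 m2 + B.
  move=> m1 m2 m2' B h; apply: hF3 => p Ip.
  have := hF2 m1 m2 p Ip; have := h p Ip.
  have -> : e p m1 m2' = e p m1 m2 + (m2 - m2') * (x p - m1) by rewrite /e; ring.
  lra.
have SG1 : forall m1 m1' m2 B, (forall p, Pset p -> (m1 - m1') * (y p - m2) <= B) ->
    G m1' m2 <= G m1 m2 + B.
  move=> m1 m1' m2 B h; suff : G m1' m2 - B <= G m1 m2 by lra.
  apply: hG3 => p Ip.
  have := hG2 m1' m2 p Ip; have := h p Ip.
  have -> : e p m1' m2 = e p m1 m2 + (m1 - m1') * (y p - m2) by rewrite /e; ring.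
  lra.
have SG2 : forall m1 m2 m2' B, (forall p, Pset p -> (m2 - m2') * (x p - m1) <= B) ->
    G m1 m2' <= G m1 m2 + B.
  move=> m1 m2 m2' B h; suff : G m1 m2' - B <= G m1 m2 by lra.
  apply: hG3 => p Ip.
  have := hG2 m1 m2' p Ip; have := h p Ip.
  have -> : e p m1 m2' = e p m1 m2 + (m2 - m2') * (x p - m1) by rewrite /e; ring.
  lra.
have hCuUB : forall z, (forall m2, muYl <= m2 <= muYu ->
    exists m1, muXl <= m1 <= muXu /\ F m1 m2 <= z) -> (Cu <= z%:E)%E.
  move=> z hz; rewrite /Cu /ucov; apply: ge_ereal_sup => _ [m2 hm2 <-].
  have [m1 [hm1 hFz]] := hz m2 hm2.
  apply: ge_ereal_inf; exists (EU m1 m2); first by exists m1.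
  by rewrite hF1 lee_fin.
have hCuLB : forall z m2, muYl <= m2 <= muYu ->
    (forall m1, muXl <= m1 <= muXu -> z <= F m1 m2) -> (z%:E <= Cu)%E.
  move=> z m2 hm2 hz; rewrite /Cu /ucov; apply: le_ereal_sup_tmp.
  eexists; first by exists m2.
  apply: le_ereal_inf_tmp => _ [m1 hm1 <-].
  by change (z%:E <= EU m1 m2)%E; rewrite hF1 lee_fin hz.
have hClLB : forall z, (forall m2, muYl <= m2 <= muYu ->
    exists m1, muXl <= m1 <= muXu /\ z <= G m1 m2) -> (z%:E <= Cl)%E.
  move=> z hz; rewrite /Cl /lcov; apply: le_ereal_inf_tmp => _ [m2 hm2 <-].
  have [m1 [hm1 hGz]] := hz m2 hm2.
  apply: le_ereal_sup_tmp; exists (EL m1 m2); first by exists m1.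
  by rewrite hG1 lee_fin.
have hClUB : forall z m2, muYl <= m2 <= muYu ->
    (forall m1, muXl <= m1 <= muXu -> G m1 m2 <= z) -> (Cl <= z%:E)%E.
  move=> z m2 hm2 hz; rewrite /Cl /lcov; apply: ge_ereal_inf.
  eexists; first by exists m2.
  apply: ge_ereal_sup => _ [m1 hm1 <-].
  by change (EL m1 m2 <= z%:E)%E; rewrite hG1 lee_fin hz.
have hpX : forall p, Pset p -> muXl <= x p <= muXu.
  by move=> p Ip; rewrite hXl1 // hXu1.
have hpY : forall p, Pset p -> muYl <= y p <= muYu.
  by move=> p Ip; rewrite hYl1 // hYu1.
have hXX : muXl <= muXu by have /andP[h1 h2] := hpX p0 Ip0; exact: le_trans h1 h2.
have hYY : muYl <= muYu by have /andP[h1 h2] := hpY p0 Ip0; exact: le_trans h1 h2.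
have flip : forall (u v S' : R), -S' <= u - v <= S' -> -S' <= v - u <= S'.
  by move=> u v S' /andP[h1 h2]; apply/andP; clear -h1 h2; split; lra.
have Lgen : forall a b S1 T1, muXl <= a <= muXu -> muYl <= b <= muYu ->
   (forall m, muXl <= m <= muXu -> -S1 <= m - a <= S1) ->
   (forall m, muYl <= m <= muYu -> -T1 <= m - b <= T1) ->
   [/\ ((F a b - S1 * T1)%:E <= Cu)%E, (Cu <= (F a b + S1 * T1)%:E)%E,
       ((G a b - S1 * T1)%:E <= Cl)%E & (Cl <= (G a b + S1 * T1)%:E)%E].
  move=> a b S1 T1 ha hb hS hT; split.
  - apply: (hCuLB _ b hb) => m1 hm1.
    suff h : F a b <= F m1 b + S1 * T1 by clear -h; lra.
    apply: SF1 => p Ip.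
    exact: prodle (hS _ hm1) (hT _ (hpY p Ip)).
  - apply: hCuUB => m2 hm2; exists a; split => //.
    apply: SF2 => p Ip.
    have h := prodle _ _ _ _ (flip _ _ _ (hT _ hm2)) (hS _ (hpX p Ip)).
    by clear -h; lra.
  - apply: hClLB => m2 hm2; exists a; split => //.
    suff h : G a b <= G a m2 + S1 * T1 by clear -h; lra.
    apply: SG2 => p Ip.
    have h := prodle _ _ _ _ (hT _ hm2) (hS _ (hpX p Ip)).
    by clear -h; lra.
  - apply: (hClUB _ b hb) => m1 hm1.
    apply: SG1 => p Ip.
    exact: prodle (flip _ _ _ (hS _ hm1)) (hT _ (hpY p Ip)).
have huX : muXl <= muXu <= muXu by rewrite lexx hXX.
have huY : muYl <= muYu <= muYu by rewrite lexx hYY.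
have hlX : muXl <= muXl <= muXu by rewrite lexx hXX.
have hlY : muYl <= muYl <= muYu by rewrite lexx hYY.
have eDX : DX = muXu - muXl by [].
have eDY : DY = muYu - muYl by [].
have bXu : forall m, muXl <= m <= muXu -> -DX <= m - muXu <= DX.
  by move=> m /andP[h1 h2]; apply/andP; clear -h1 h2 eDX eDY; split; lra.
have bXl : forall m, muXl <= m <= muXu -> -DX <= m - muXl <= DX.
  by move=> m /andP[h1 h2]; apply/andP; clear -h1 h2 eDX eDY; split; lra.
have bYu : forall m, muYl <= m <= muYu -> -DY <= m - muYu <= DY.
  by move=> m /andP[h1 h2]; apply/andP; clear -h1 h2 eDX eDY; split; lra.
have bYl : forall m, muYl <= m <= muYu -> -DY <= m - muYl <= DY.
  by move=> m /andP[h1 h2]; apply/andP; clear -h1 h2 eDX eDY; split; lra.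
have [cu Ecu] : exists cu, Cu = cu%:E.
  have [h1 h2 _ _] := Lgen _ _ _ _ huX huY bXu bYu.
  exists (fine Cu); rewrite fineK // fin_numElt.
  by rewrite (lt_le_trans (ltNyr _) h1) (le_lt_trans h2 (ltry _)).
have [cl Ecl] : exists cl, Cl = cl%:E.
  have [_ _ h1 h2] := Lgen _ _ _ _ huX huY bXu bYu.
  exists (fine Cl); rewrite fineK // fin_numElt.
  by rewrite (lt_le_trans (ltNyr _) h1) (le_lt_trans h2 (ltry _)).
have LgenR : forall a b S1 T1, muXl <= a <= muXu -> muYl <= b <= muYu ->
   (forall m, muXl <= m <= muXu -> -S1 <= m - a <= S1) ->
   (forall m, muYl <= m <= muYu -> -T1 <= m - b <= T1) ->
   [/\ F a b - S1 * T1 <= cu, cu <= F a b + S1 * T1,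
       G a b - S1 * T1 <= cl & cl <= G a b + S1 * T1].
  move=> a b S1 T1 ha hb hS hT.
  by have [] := Lgen a b S1 T1 ha hb hS hT; rewrite Ecu Ecl !lee_fin.
have CuUB : forall z, (forall m2, muYl <= m2 <= muYu ->
    exists m1, muXl <= m1 <= muXu /\ F m1 m2 <= z) -> cu <= z.
  by move=> z hz; rewrite -lee_fin -Ecu; exact: hCuUB.
have CuLB : forall z m2, muYl <= m2 <= muYu ->
    (forall m1, muXl <= m1 <= muXu -> z <= F m1 m2) -> z <= cu.
  by move=> z m2 hm2 hz; rewrite -lee_fin -Ecu; exact: (hCuLB _ _ hm2).
have ClLB : forall z, (forall m2, muYl <= m2 <= muYu ->
    exists m1, muXl <= m1 <= muXu /\ z <= G m1 m2) -> z <= cl.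
  by move=> z hz; rewrite -lee_fin -Ecl; exact: hClLB.
have ClUB : forall z m2, muYl <= m2 <= muYu ->
    (forall m1, muXl <= m1 <= muXu -> G m1 m2 <= z) -> cl <= z.
  by move=> z m2 hm2 hz; rewrite -lee_fin -Ecl; exact: (hClUB _ _ hm2).
have CovU : forall p, Pset p -> c p - x p * y p <= cu.
  move=> p Ip; apply: (CuLB _ (y p) (hpY p Ip)) => m1 _.
  by have h := hF2 m1 (y p) p Ip; rewrite /e in h; clear -h; lra.
have CovL : forall p, Pset p -> cl <= c p - x p * y p.
  move=> p Ip; apply: (ClUB _ (y p) (hpY p Ip)) => m1 _.
  by have h := hG2 m1 (y p) p Ip; rewrite /e in h; clear -h; lra.
have T1u : cu <= F muXu muYu.
  apply: CuUB => m2 hm2; exists muXu; split => //.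
  rewrite -[F muXu muYu]addr0; apply: SF2 => p Ip.
  have /andP[? ?] := hpX p Ip; move: hm2 => /andP[? ?].
  by apply: mulr_ge0_le0; rewrite ?subr_ge0 ?subr_le0.
have T1l : cu <= F muXl muYl.
  apply: CuUB => m2 hm2; exists muXl; split => //.
  rewrite -[F muXl muYl]addr0; apply: SF2 => p Ip.
  have /andP[? ?] := hpX p Ip; move: hm2 => /andP[? ?].
  by apply: mulr_le0_ge0; rewrite ?subr_ge0 ?subr_le0.
have T2u : cl <= G muXu muYu.
  apply: (ClUB _ _ huY) => m1 hm1.
  rewrite -[G muXu muYu]addr0; apply: SG1 => p Ip.
  have /andP[? ?] := hpY p Ip; move: hm1 => /andP[? ?].
  by apply: mulr_ge0_le0; rewrite ?subr_ge0 ?subr_le0.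
have T2l : cl <= G muXl muYl.
  apply: (ClUB _ _ hlY) => m1 hm1.
  rewrite -[G muXl muYl]addr0; apply: SG1 => p Ip.
  have /andP[? ?] := hpY p Ip; move: hm1 => /andP[? ?].
  by apply: mulr_le0_ge0; rewrite ?subr_ge0 ?subr_le0.
have eMu : Mu = Mmax muXl muXu muYl muYu by [].
have eMl : Ml = Mmin muXl muXu muYl muYu by [].
have ec : forall p, e p 0 0 = c p by move=> p; rewrite /e; ring.
have P2a : F 0 0 <= cu + Mu.
  apply: hF3 => p Ip; rewrite ec.
  have [_ h] := bilin' (hpX p Ip) (hpY p Ip).
  by have h' := CovU p Ip; rewrite eMu; clear -h h'; lra.
have P2b : cu + Ml <= F 0 0.
  suff h : cu <= F 0 0 - Ml by clear -h; lra.
  apply: CuUB => m2 hm2.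
  have [m1 [hm1 hcl]] := clamp _ _ _ _ _ hXX hm2.
  exists m1; split => //; apply: hF3 => p Ip.
  have [h _] := hcl _ _ (hpX p Ip) (hpY p Ip).
  have h' := hF2 0 0 p Ip; rewrite ec in h'; rewrite /e eMl; clear -h h'; lra.
have P2c : cl + Ml <= G 0 0.
  apply: hG3 => p Ip; rewrite ec.
  have [h _] := bilin' (hpX p Ip) (hpY p Ip).
  by have h' := CovL p Ip; rewrite eMl; clear -h h'; lra.
have P2d : G 0 0 <= cl + Mu.
  suff h : G 0 0 - Mu <= cl by clear -h; lra.
  apply: ClLB => m2 hm2.
  have [m1 [hm1 hcl]] := clamp _ _ _ _ _ hXX hm2.
  exists m1; split => //; apply: hG3 => p Ip.
  have [_ h] := hcl _ _ (hpX p Ip) (hpY p Ip).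
  have h' := hG2 0 0 p Ip; rewrite ec in h'; rewrite /e eMu; clear -h h'; lra.
have eRX : rhoX = (muXu + muXl) / 2 by [].
have eRY : rhoY = (muYu + muYl) / 2 by [].
have hrX : muXl <= rhoX <= muXu by apply/andP; clear -eRX hXX; split; lra.
have hrY : muYl <= rhoY <= muYu by apply/andP; clear -eRY hYY; split; lra.
have brX : forall m, muXl <= m <= muXu -> -(DX / 2) <= m - rhoX <= DX / 2.
  by move=> m /andP[h1 h2]; apply/andP; clear -h1 h2 eRX eDX; split; lra.
have brY : forall m, muYl <= m <= muYu -> -(DY / 2) <= m - rhoY <= DY / 2.
  by move=> m /andP[h1 h2]; apply/andP; clear -h1 h2 eRY eDY; split; lra.
have e4 : DX / 2 * (DY / 2) = DX * DY / 4.
  by rewrite mulrACA -invfM; congr (_ * _ / _); rewrite -natrM.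
have [r1 r2 r3 r4] := LgenR _ _ _ _ hrX hrY brX brY.
rewrite e4 in r1 r2 r3 r4.
have E00 : Ehat Pset (fun w => X w * Y w) = (F 0 0)%:E.
  rewrite -hF1 /EU /=; congr (Ehat Pset _); apply/funext => w /=.
  by rewrite !subr0.
have G00 : (- Ehat Pset (fun w => - (X w * Y w))%R)%E = (G 0 0)%:E.
  rewrite -hG1 /EL /=; congr (- Ehat Pset _)%E; apply/funext => w /=.
  by rewrite !subr0.
have Grho : Ehat Pset (fun w => - ((X w - rhoX) * (Y w - rhoY)))%R
    = (- G rhoX rhoY)%:E.
  by rewrite EFinN -hG1 /EL /= oppeK.
split.
  split.
    move=> m1 m2 [[-> ->]|[-> ->]].
      have [a1 a2 a3 a4] := LgenR _ _ _ _ huX huY bXu bYu.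
      rewrite Ecu Ecl !hF1 !hG1 -!EFinD !lee_fin.
      by clear -a1 a2 a3 a4 T1u T2u; split; apply/andP; split; lra.
    have [a1 a2 a3 a4] := LgenR _ _ _ _ hlX hlY bXl bYl.
    rewrite Ecu Ecl !hF1 !hG1 -!EFinD !lee_fin.
    by clear -a1 a2 a3 a4 T1l T2l; split; apply/andP; split; lra.
  move=> m1 m2 [[-> ->]|[-> ->]].
    have [a1 a2 a3 a4] := LgenR _ _ _ _ hlX huY bXl bYu.
    rewrite Ecu Ecl !hF1 !hG1 -!EFinN -!EFinD !lee_fin.
    by clear -a1 a2 a3 a4; split; apply/andP; split; lra.
  have [a1 a2 a3 a4] := LgenR _ _ _ _ huX hlY bXu bYl.
  rewrite Ecu Ecl !hF1 !hG1 -!EFinN -!EFinD !lee_fin.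
  by clear -a1 a2 a3 a4; split; apply/andP; split; lra.
split.
  rewrite E00 G00 Ecu Ecl -!EFinD !lee_fin.
  by clear -P2a P2b P2c P2d; split; apply/andP; split; lra.
split.
  rewrite Ecu Ecl !hF1 !hG1 -!EFinN -!EFinD !lee_fin.
  by clear -r1 r2 r3 r4; split; apply/andP; split; lra.
have c1 := CovU p0 Ip0; have c2 := CovL p0 Ip0.
rewrite Ecu Ecl hF1 Grho -!EFinN -!EFinD !lee_fin.
by clear -c1 c2 r2 r3; apply/andP; split; lra.
Qed.
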